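(* Let $\mathcal{T}_H$ be a partition of the box $\Omega\subset\mathbb{R}^3$ into axis-parallel rectangular boxes and let $\mathcal{T}_h$ be its uniform refinement (each box of $\mathcal{T}_H$ split into $8$ congruent boxes). Let $E$ be an interior edge of $\mathcal{T}_H$ parallel to the $x_1$-axis, let $T_E^1,\dots,T_E^4\in\mathcal{T}_H$ be the four coarse elements sharing $E$, put $D=\bigcup_{i=1}^4 T_E^i$, and let $v$ be the midpoint of $E$ (a vertex of $\mathcal{T}_h$). Let $e_1,\dots,e_6$ be the six edges of $\mathcal{T}_h$ having $v$ as an endpoint, where $e_{2i-1},e_{2i}$ are parallel to the $x_i$-axis ($i=1,2,3$). For each $i$ fix the tangential direction $\mathbf{t}_{x_i}$ of all fine edges parallel to the $x_i$-axis, oriented so that $v$ is the terminal endpoint of $e_{2i-1}$ (and the initial endpoint of $e_{2i}$). Let $\mathbf{u}\in N_h(D)$ (the lowest order hexahedral Nédélec space on the fine elements contained in $D$) satisfy: (i) $\mathbf{u}\cdot\mathbf{t}_{x_i}=-1$ on $e_{2i-1}$ and $\mathbf{u}\cdot\mathbf{t}_{x_i}=1$ on $e_{2i}$ for $i=1,2,3$; (ii) the tangential component of $\mathbf{u}$ vanishes on every other fine edge lying on $\bigcup_{i=1}^4\partial T_E^i$; (iii) for each $i=1,\dots,4$, $\int_{T_E^i}\mathbf{u}\cdot\mathbf{w}\,d\mathbf{x}=0$ for all $\mathbf{w}\in N_h^{T_E^i}$. Then $\nabla\times\mathbf{u}$ does not vanish identically.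
   Context: The lowest order Nédélec space on a set of axis-parallel boxes consists of vector fields in $H(\mathbf{curl})$ whose restriction to each box $T$ is of the form $(a_1+a_2x_2+a_3x_3+a_4x_2x_3,\; b_1+b_2x_3+b_3x_1+b_4x_3x_1,\; c_1+c_2x_1+c_3x_2+c_4x_1x_2)$; on each fine edge $e$ the tangential component $\mathbf{u}\cdot\mathbf{t}_e$ is constant, and these twelve edge values per box determine the field. For $T\in\mathcal{T}_H$, $N_h^T$ denotes the set of fields of the fine Nédélec space that vanish outside $T$ (equivalently, whose tangential components vanish on all fine edges not lying in the interior of $T$). *)

(* Defs.v *)
From Stdlib Require Import Reals Lra.
From Coquelicot Require Import Coquelicot.
Open Scope R_scope.

Record vec3 := V3 { v1 : R ; v2 : R ; v3 : R }.
Definition zero3 : vec3 := V3 0 0 0.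
Definition dot (a b : vec3) : R := v1 a * v1 b + v2 a * v2 b + v3 a * v3 b.

Definition field := R -> R -> R -> vec3.

Definition is_ned (F : field) : Prop :=
  exists a1 a2 a3 a4 b1 b2 b3 b4 c1 c2 c3 c4 : R,
    forall x1 x2 x3,
      F x1 x2 x3 =
      V3 (a1 + a2 * x2 + a3 * x3 + a4 * x2 * x3)
         (b1 + b2 * x3 + b3 * x1 + b4 * x3 * x1)
         (c1 + c2 * x1 + c3 * x2 + c4 * x1 * x2).

Definition curl (F : field) (x1 x2 x3 : R) : vec3 :=
  V3 (Derive (fun t => v3 (F x1 t x3)) x2 - Derive (fun t => v2 (F x1 x2 t)) x3)
     (Derive (fun t => v1 (F x1 x2 t)) x3 - Derive (fun t => v3 (F t x2 x3)) x1)
     (Derive (fun t => v2 (F t x2 x3)) x1 - Derive (fun t => v1 (F x1 t x3)) x2).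

(** E = [mx0, mx2] x {my2} x {mz2} is an interior coarse edge parallel to x1.
    The four coarse boxes sharing E are
      [mx0,mx2] x [my0,my2] x [mz0,mz2],  [mx0,mx2] x [my2,my4] x [mz0,mz2],
      [mx0,mx2] x [my0,my2] x [mz2,mz4],  [mx0,mx2] x [my2,my4] x [mz2,mz4]. *)
Record mesh := Mesh {
  mx0 : R ; mx2 : R ;
  my0 : R ; my2 : R ; my4 : R ;
  mz0 : R ; mz2 : R ; mz4 : R }.

Definition mesh_ok (m : mesh) : Prop :=
  mx0 m < mx2 m /\ my0 m < my2 m < my4 m /\ mz0 m < mz2 m < mz4 m.

Definition mid (a b : R) : R := (a + b) / 2.

Definition X (m : mesh) (n : nat) : R :=
  match n with 0%nat => mx0 m | 1%nat => mid (mx0 m) (mx2 m) | _ => mx2 m end.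
Definition Y (m : mesh) (n : nat) : R :=
  match n with
  | 0%nat => my0 m | 1%nat => mid (my0 m) (my2 m) | 2%nat => my2 m
  | 3%nat => mid (my2 m) (my4 m) | _ => my4 m end.
Definition Z (m : mesh) (n : nat) : R :=
  match n with
  | 0%nat => mz0 m | 1%nat => mid (mz0 m) (mz2 m) | 2%nat => mz2 m
  | 3%nat => mid (mz2 m) (mz4 m) | _ => mz4 m end.

(** Fine box (i,j,k) = [X i, X (i+1)] x [Y j, Y (j+1)] x [Z k, Z (k+1)];
    the fine boxes of D are those with i < 2, j < 4, k < 4. *)
Definition in_D (i j k : nat) : Prop := (i < 2 /\ j < 4 /\ k < 4)%nat.

(** Coarse box (p,q), p q < 2, is [X 0, X 2] x [Y (2p), Y (2p+2)] x [Z (2q), Z (2q+2)];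
    these are the four elements T_E^1..T_E^4. Fine box (i,j,k) of D lies in it iff: *)
Definition in_coarse (p q j k : nat) : Prop := (j / 2 = p /\ k / 2 = q)%nat.

Definition pwfield := nat -> nat -> nat -> field.

(** Tangential continuity across every interior face of the fine mesh of D
    (H(curl)-conformity of a piecewise smooth field). *)
Definition conforming (m : mesh) (u : pwfield) : Prop :=
  (forall i j k, in_D i j k -> in_D (S i) j k ->
     forall y z, Y m j <= y <= Y m (S j) -> Z m k <= z <= Z m (S k) ->
       v2 (u i j k (X m (S i)) y z) = v2 (u (S i) j k (X m (S i)) y z) /\
       v3 (u i j k (X m (S i)) y z) = v3 (u (S i) j k (X m (S i)) y z)) /\
  (forall i j k, in_D i j k -> in_D i (S j) k ->
     forall x z, X m i <= x <= X m (S i) -> Z m k <= z <= Z m (S k) ->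
       v1 (u i j k x (Y m (S j)) z) = v1 (u i (S j) k x (Y m (S j)) z) /\
       v3 (u i j k x (Y m (S j)) z) = v3 (u i (S j) k x (Y m (S j)) z)) /\
  (forall i j k, in_D i j k -> in_D i j (S k) ->
     forall x y, X m i <= x <= X m (S i) -> Y m j <= y <= Y m (S j) ->
       v1 (u i j k x y (Z m (S k))) = v1 (u i j (S k) x y (Z m (S k))) /\
       v2 (u i j k x y (Z m (S k))) = v2 (u i j (S k) x y (Z m (S k)))).

Definition in_Nh_D (m : mesh) (u : pwfield) : Prop :=
  (forall i j k, in_D i j k -> is_ned (u i j k)) /\ conforming m u.

Definition zero_tan_bdry_D (m : mesh) (w : pwfield) : Prop :=
  (forall j k, (j < 4 /\ k < 4)%nat ->
     forall y z, Y m j <= y <= Y m (S j) -> Z m k <= z <= Z m (S k) ->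
       v2 (w 0%nat j k (X m 0) y z) = 0 /\ v3 (w 0%nat j k (X m 0) y z) = 0 /\
       v2 (w 1%nat j k (X m 2) y z) = 0 /\ v3 (w 1%nat j k (X m 2) y z) = 0) /\
  (forall i k, (i < 2 /\ k < 4)%nat ->
     forall x z, X m i <= x <= X m (S i) -> Z m k <= z <= Z m (S k) ->
       v1 (w i 0%nat k x (Y m 0) z) = 0 /\ v3 (w i 0%nat k x (Y m 0) z) = 0 /\
       v1 (w i 3%nat k x (Y m 4) z) = 0 /\ v3 (w i 3%nat k x (Y m 4) z) = 0) /\
  (forall i j, (i < 2 /\ j < 4)%nat ->
     forall x y, X m i <= x <= X m (S i) -> Y m j <= y <= Y m (S j) ->
       v1 (w i j 0%nat x y (Z m 0)) = 0 /\ v2 (w i j 0%nat x y (Z m 0)) = 0 /\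
       v1 (w i j 3%nat x y (Z m 4)) = 0 /\ v2 (w i j 3%nat x y (Z m 4)) = 0).

(** N_h^T for T = coarse box (p,q): fine Nedelec fields vanishing outside T
    (zero on the other fine boxes, zero tangential trace on the boundary of D,
    H(curl)-conforming). *)
Definition in_NhT (m : mesh) (p q : nat) (w : pwfield) : Prop :=
  (forall i j k, in_D i j k -> is_ned (w i j k)) /\
  conforming m w /\ zero_tan_bdry_D m w /\
  (forall i j k, in_D i j k -> ~ in_coarse p q j k ->
     forall x y z, w i j k x y z = zero3).

Definition box_int (m : mesh) (i j k : nat) (f : R -> R -> R -> R) : R :=
  RInt (fun x => RInt (fun y => RInt (fun z => f x y z)
                                  (Z m k) (Z m (S k)))
                      (Y m j) (Y m (S j)))
       (X m i) (X m (S i)).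

Definition sum2 (f : nat -> R) : R := f 0%nat + f 1%nat.

Definition coarse_int_dot (m : mesh) (p q : nat) (u w : pwfield) : R :=
  sum2 (fun a => sum2 (fun b => sum2 (fun c =>
    let i := a in let j := (2 * p + b)%nat in let k := (2 * q + c)%nat in
    box_int m i j k (fun x y z => dot (u i j k x y z) (w i j k x y z))))).

(** * Fine edges.  An edge is given by its direction and its initial node
    (i,j,k) (node (i,j,k) = (X i, Y j, Z k)); it is oriented in the
    positive coordinate direction t_{x_d}. *)
Inductive dir := D1 | D2 | D3.

Definition fine_edge (d : dir) (i j k : nat) : Prop :=
  match d with
  | D1 => (i < 2 /\ j <= 4 /\ k <= 4)%nat
  | D2 => (i <= 2 /\ j < 4 /\ k <= 4)%nat
  | D3 => (i <= 2 /\ j <= 4 /\ k < 4)%nat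
  end.

Definition edge_range (m : mesh) (d : dir) (i j k : nat) (s : R) : Prop :=
  match d with
  | D1 => X m i <= s <= X m (S i)
  | D2 => Y m j <= s <= Y m (S j)
  | D3 => Z m k <= s <= Z m (S k)
  end.

Definition eval_on_edge (m : mesh) (d : dir) (i j k : nat) (F : field) (s : R) : vec3 :=
  match d with
  | D1 => F s (Y m j) (Z m k)
  | D2 => F (X m i) s (Z m k)
  | D3 => F (X m i) (Y m j) s
  end.

Definition edge_point (m : mesh) (d : dir) (i j k : nat) (s : R) : R * R * R :=
  match d with
  | D1 => (s, Y m j, Z m k)
  | D2 => (X m i, s, Z m k)
  | D3 => (X m i, Y m j, s)
  end.

Definition tang (d : dir) (a : vec3) : R :=
  match d with D1 => v1 a | D2 => v2 a | D3 => v3 a end.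

Definition box_has_edge (d : dir) (i j k bi bj bk : nat) : Prop :=
  match d with
  | D1 => i = bi /\ (j = bj \/ j = S bj) /\ (k = bk \/ k = S bk)
  | D2 => j = bj /\ (i = bi \/ i = S bi) /\ (k = bk \/ k = S bk)
  | D3 => k = bk /\ (i = bi \/ i = S bi) /\ (j = bj \/ j = S bj)
  end.

(** u . t_{x_d} = c on the fine edge (d,i,j,k) (as seen from every fine box of D
    having this edge). *)
Definition tang_on_edge (m : mesh) (u : pwfield) (d : dir) (i j k : nat) (c : R) : Prop :=
  forall bi bj bk, in_D bi bj bk -> box_has_edge d i j k bi bj bk ->
    forall s, edge_range m d i j k s ->
      tang d (eval_on_edge m d i j k (u bi bj bk) s) = c.

Definition on_bdry_coarse (m : mesh) (p q : nat) (P : R * R * R) : Prop :=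
  let '(x, y, z) := P in
  let l1 := X m 0 in let h1 := X m 2 in
  let l2 := Y m (2 * p) in let h2 := Y m (2 * p + 2) in
  let l3 := Z m (2 * q) in let h3 := Z m (2 * q + 2) in
  (l1 <= x <= h1 /\ l2 <= y <= h2 /\ l3 <= z <= h3) /\
  (x = l1 \/ x = h1 \/ y = l2 \/ y = h2 \/ z = l3 \/ z = h3).

Definition edge_on_coarse_bdry (m : mesh) (d : dir) (i j k : nat) : Prop :=
  forall s, edge_range m d i j k s ->
    exists p q, (p < 2 /\ q < 2)%nat /\ on_bdry_coarse m p q (edge_point m d i j k s).

(** The six fine edges e_1..e_6 at v = (X 1, Y 2, Z 2) (midpoint of E):
    e_{2l-1} ends at v, e_{2l} starts at v. *)
Definition is_star_edge (d : dir) (i j k : nat) : Prop :=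
  (d = D1 /\ i = 0%nat /\ j = 2%nat /\ k = 2%nat) \/
  (d = D1 /\ i = 1%nat /\ j = 2%nat /\ k = 2%nat) \/
  (d = D2 /\ i = 1%nat /\ j = 1%nat /\ k = 2%nat) \/
  (d = D2 /\ i = 1%nat /\ j = 2%nat /\ k = 2%nat) \/
  (d = D3 /\ i = 1%nat /\ j = 2%nat /\ k = 1%nat) \/
  (d = D3 /\ i = 1%nat /\ j = 2%nat /\ k = 2%nat).

Definition cond_i (m : mesh) (u : pwfield) : Prop :=
  tang_on_edge m u D1 0 2 2 (-1) /\ tang_on_edge m u D1 1 2 2 1 /\
  tang_on_edge m u D2 1 1 2 (-1) /\ tang_on_edge m u D2 1 2 2 1 /\
  tang_on_edge m u D3 1 2 1 (-1) /\ tang_on_edge m u D3 1 2 2 1.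

Definition cond_ii (m : mesh) (u : pwfield) : Prop :=
  forall d i j k, fine_edge d i j k -> ~ is_star_edge d i j k ->
    edge_on_coarse_bdry m d i j k -> tang_on_edge m u d i j k 0.

Definition cond_iii (m : mesh) (u : pwfield) : Prop :=
  forall p q, (p < 2 /\ q < 2)%nat ->
    forall w, in_NhT m p q w -> coarse_int_dot m p q u w = 0.

Definition curl_not_identically_zero (m : mesh) (u : pwfield) : Prop :=
  exists i j k, in_D i j k /\
    exists x y z, X m i < x < X m (S i) /\ Y m j < y < Y m (S j) /\
                  Z m k < z < Z m (S k) /\ curl (u i j k) x y z <> zero3.

(* Main.v *)
Require Import Defs.
From Stdlib Require Import Reals Lra Lia Classical FunctionalExtensionality.
From Coquelicot Require Import Coquelicot.
Open Scope R_scope.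

Lemma I_quad a b p0 p1 p2 :
  is_RInt (fun x => p0 + p1*(x-a) + p2*(x-a)^2) a b
          (p0*(b-a) + p1*(b-a)^2/2 + p2*(b-a)^3/3).
Proof.
  set (f := fun x => p0*(x-a) + p1*(x-a)^2/2 + p2*(x-a)^3/3).
  replace (p0*(b-a) + p1*(b-a)^2/2 + p2*(b-a)^3/3) with (minus (f b) (f a)).
  2:{ unfold f, minus, plus, opp; simpl; field. }
  apply (is_RInt_derive f (fun x => p0 + p1*(x-a) + p2*(x-a)^2)).
  - intros x _. unfold f. auto_derive; [auto|]. field.
  - intros x _. apply (@ex_derive_continuous R_AbsRing R_NormedModule (fun x => p0 + p1*(x-a) + p2*(x-a)^2)). auto_derive. auto.
Qed.

Lemma I_gen a b p0 p1 p2 (g : R -> R) (v : R) :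
  (forall x, g x = p0 + p1*(x-a) + p2*(x-a)^2) ->
  v = p0*(b-a) + p1*(b-a)^2/2 + p2*(b-a)^3/3 ->
  is_RInt g a b v.
Proof.
  intros Hg Hv. subst v.
  apply is_RInt_ext with (f := fun x => p0 + p1*(x-a) + p2*(x-a)^2).
  - intros; symmetry; apply Hg.
  - apply I_quad.
Qed.

Lemma I_up a b : b - a <> 0 ->
  is_RInt (fun x => ((x-a)/(b-a)) * ((x-a)/(b-a))) a b ((b-a)/3).
Proof.
  intro H. apply I_gen with 0 0 (1/(b-a)^2).
  - intros; field; auto.
  - field; auto.
Qed.

Lemma I_down a b : b - a <> 0 ->
  is_RInt (fun x => ((b-x)/(b-a)) * ((b-x)/(b-a))) a b ((b-a)/3).
Proof.
  intro H. apply I_gen with 1 (-2/(b-a)) (1/(b-a)^2).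
  - intros; field; auto.
  - field; auto.
Qed.

Lemma I_mix a b g : b - a <> 0 ->
  is_RInt (fun x => g * (((b-x)/(b-a)) * ((b-x)/(b-a))) - ((x-a)/(b-a)) * ((b-x)/(b-a))) a b
     (g * ((b-a)/3) - (b-a)/6).
Proof.
  intro H. apply I_gen with g (-2*g/(b-a) - 1/(b-a)) (g/(b-a)^2 + 1/(b-a)^2).
  - intros; field; auto.
  - field; auto.
Qed.

Lemma I_scal a b g (f : R -> R) v : is_RInt f a b v -> is_RInt (fun x => g * f x) a b (g * v).
Proof. intro H. apply (is_RInt_scal f a b g v H). Qed.

Lemma box_sep_gen (F G : R -> R) a b c d e f IF IG :
  is_RInt F a b IF -> is_RInt G c d IG ->
  RInt (fun x => RInt (fun y => RInt (fun z => F x * G y) e f) c d) a b = (f - e) * IG * IF.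
Proof.
  intros HF HG.
  assert (E1 : (fun x => RInt (fun y => RInt (fun z => F x * G y) e f) c d)
             = (fun x => ((f - e) * IG) * F x)).
  { apply functional_extensionality; intro x.
    assert (E2 : (fun y => RInt (fun z => F x * G y) e f) = (fun y => ((f-e) * F x) * G y)).
    { apply functional_extensionality; intro y. rewrite RInt_const.
      unfold scal; simpl; unfold mult; simpl; ring. }
    rewrite E2. apply is_RInt_unique.
    replace ((f - e) * IG * F x) with (((f-e) * F x) * IG) by ring.
    apply I_scal. exact HG. }
  rewrite E1. apply is_RInt_unique. apply I_scal. exact HF.
Qed.

Lemma box_sep m i j k (h : R -> R -> R -> R) (F G : R -> R) IF IG :
  (forall x y z, h x y z = F x * G y) ->
  is_RInt F (X m i) (X m (S i)) IF -> is_RInt G (Y m j) (Y m (S j)) IG ->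
  box_int m i j k h = (Defs.Z m (S k) - Defs.Z m k) * IG * IF.
Proof.
  intros Hh HF HG. unfold box_int.
  assert (E : h = fun x y z => F x * G y).
  { apply functional_extensionality; intro x; apply functional_extensionality; intro y;
    apply functional_extensionality; intro z; apply Hh. }
  rewrite E. apply box_sep_gen; auto.
Qed.

Lemma I_zero a b : is_RInt (fun _ => 0) a b 0.
Proof. apply I_gen with 0 0 0. intros; ring. field. Qed.

Lemma box_zero m i j k (h : R -> R -> R -> R) :
  (forall x y z, h x y z = 0) -> box_int m i j k h = 0.
Proof.
  intros Hh. rewrite (box_sep m i j k h (fun _ => 0) (fun _ => 0) 0 0).
  - ring.
  - intros; rewrite Hh; ring.
  - apply I_zero.
  - apply I_zero.
Qed.

Lemma mesh_facts m : mesh_ok m ->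
  X m 0 < X m 1 < X m 2 /\ X m 1 - X m 0 = X m 2 - X m 1 /\
  Y m 0 < Y m 1 < Y m 2 /\ Y m 1 - Y m 0 = Y m 2 - Y m 1 /\
  Defs.Z m 0 < Defs.Z m 1 < Defs.Z m 2 /\ Defs.Z m 1 - Defs.Z m 0 = Defs.Z m 2 - Defs.Z m 1 /\
  Y m 2 < Y m 3 < Y m 4 /\ Defs.Z m 2 < Defs.Z m 3 < Defs.Z m 4.
Proof.
  unfold mesh_ok, X, Y, Defs.Z, mid; simpl; intros; lra.
Qed.

Definition phi (m : mesh) (i : nat) (x : R) : R :=
  match i with 0%nat => (x - X m 0)/(X m 1 - X m 0) | _ => (X m 2 - x)/(X m 2 - X m 1) end.
Definition psi (m : mesh) (j : nat) (y : R) : R :=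
  match j with 0%nat => (y - Y m 0)/(Y m 1 - Y m 0) | _ => (Y m 2 - y)/(Y m 2 - Y m 1) end.

Definition wt (m : mesh) (kk : nat) : pwfield := fun i j k =>
  if andb (Nat.ltb j 2) (Nat.eqb k kk) then (fun x y z => V3 0 0 (phi m i x * psi m j y))
  else (fun _ _ _ => zero3).

Lemma phi_aff m i : exists p q, forall x, phi m i x = p + q * x.
Proof.
  destruct i as [|i]; unfold phi, psi; cbv beta iota.
  - exists (- X m 0 / (X m 1 - X m 0)), (1/(X m 1 - X m 0)); intros; unfold Rdiv; ring.
  - exists (X m 2 / (X m 2 - X m 1)), (-1/(X m 2 - X m 1)); intros; unfold Rdiv; ring.
Qed.
Lemma psi_aff m i : exists p q, forall x, psi m i x = p + q * x.
Proof.
  destruct i as [|i]; unfold phi, psi; cbv beta iota.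
  - exists (- Y m 0 / (Y m 1 - Y m 0)), (1/(Y m 1 - Y m 0)); intros; unfold Rdiv; ring.
  - exists (Y m 2 / (Y m 2 - Y m 1)), (-1/(Y m 2 - Y m 1)); intros; unfold Rdiv; ring.
Qed.

Lemma zero_ned : is_ned (fun _ _ _ => zero3).
Proof.
  exists 0,0,0,0,0,0,0,0,0,0,0,0. intros. unfold zero3. f_equal; ring.
Qed.

Lemma wt_ned m kk i j k : is_ned (wt m kk i j k).
Proof.
  unfold wt. destruct (andb _ _).
  - destruct (phi_aff m i) as [p [q Hp]]. destruct (psi_aff m j) as [r [s Hr]].
    exists 0,0,0,0,0,0,0,0,(p*r),(q*r),(p*s),(q*s). intros. rewrite Hp, Hr. f_equal; ring.
  - apply zero_ned.
Qed.

Lemma wt_in_NhT m kk : mesh_ok m -> (kk < 2)%nat -> in_NhT m 0 0 (wt m kk).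
Proof.
  intros Hm Hkk. destruct (mesh_facts m Hm) as (HX & HXe & HY & HYe & _).
  assert (P01 : phi m 0 (X m 1) = 1) by (unfold phi, psi; cbv beta iota; field; lra).
  assert (P11 : phi m 1 (X m 1) = 1) by (unfold phi, psi; cbv beta iota; field; lra).
  assert (P00 : phi m 0 (X m 0) = 0) by (unfold phi, psi; cbv beta iota; field; lra).
  assert (P12 : phi m 1 (X m 2) = 0) by (unfold phi, psi; cbv beta iota; field; lra).
  assert (Q01 : psi m 0 (Y m 1) = 1) by (unfold phi, psi; cbv beta iota; field; lra).
  assert (Q11 : psi m 1 (Y m 1) = 1) by (unfold phi, psi; cbv beta iota; field; lra).
  assert (Q00 : psi m 0 (Y m 0) = 0) by (unfold phi, psi; cbv beta iota; field; lra).
  assert (Q12 : psi m 1 (Y m 2) = 0) by (unfold phi, psi; cbv beta iota; field; lra).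
  split; [intros; apply wt_ned|].
  split; [|split].
  -
    split; [|split].
    + intros i j k [Hi _] [Hi' _] y z _ _.
      destruct i as [|i]; [|exfalso; lia].
      unfold wt. destruct (andb _ _); cbn -[X Y Defs.Z phi psi]; [rewrite P01, P11|]; split; reflexivity.
    + intros i j k [_ [Hj _]] [_ [Hj' _]] x z _ _.
      unfold wt.
      destruct j as [|[|[|j]]]; try (exfalso; lia); cbn -[X Y Defs.Z phi psi].
      * destruct (Nat.eqb k kk); cbn -[X Y Defs.Z phi psi]; [rewrite Q01, Q11|]; split; reflexivity.
      * destruct (Nat.eqb k kk); cbn -[X Y Defs.Z phi psi]; [rewrite Q12|]; split; try reflexivity; ring.
      * split; reflexivity.
    + intros i j k _ _ x y _ _. unfold wt.
      destruct (andb _ _); destruct (andb (Nat.ltb j 2) _); cbn -[X Y Defs.Z phi psi]; split; reflexivity.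
  -
    split; [|split].
    + intros j k _ y z _ _. unfold wt.
      destruct (andb _ _); cbn -[X Y Defs.Z phi psi]; [rewrite P00, P12|]; repeat split; ring.
    + intros i k _ x z _ _. unfold wt.
      destruct (andb (Nat.ltb 0 2) _); cbn -[X Y Defs.Z phi psi]; [rewrite Q00|]; repeat split; ring.
    + intros i j _ x y _ _. unfold wt.
      destruct (andb _ _); destruct (andb (Nat.ltb j 2) _); cbn -[X Y Defs.Z phi psi]; repeat split; reflexivity.
  - intros i j k _ Hnc x y z. unfold wt.
    destruct (Nat.ltb j 2) eqn:Ej; destruct (Nat.eqb k kk) eqn:Ek; cbn -[X Y Defs.Z phi psi]; try reflexivity.
    exfalso. apply Hnc. apply Nat.ltb_lt in Ej. apply Nat.eqb_eq in Ek. subst k.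
    unfold in_coarse. destruct j as [|[|j]]; [| |lia]; destruct kk as [|[|kk]]; try lia; cbn -[X Y Defs.Z phi psi]; auto.
Qed.

Lemma Dv (f : R -> R) (x l : R) : is_derive f x l -> Derive f x = l.
Proof. apply is_derive_unique. Qed.

Lemma Der_lin (p q y : R) : Derive (fun t => p + q * t) y = q.
Proof. apply is_derive_unique. auto_derive; [auto| ring]. Qed.

Lemma curl_formula a1 a2 a3 a4 b1 b2 b3 b4 c1 c2 c3 c4 x y z :
  curl (fun x1 x2 x3 => V3 (a1 + a2 * x2 + a3 * x3 + a4 * x2 * x3)
         (b1 + b2 * x3 + b3 * x1 + b4 * x3 * x1)
         (c1 + c2 * x1 + c3 * x2 + c4 * x1 * x2)) x y z =
  V3 ((c3 + c4 * x) - (b2 + b4 * x)) ((a3 + a4 * y) - (c2 + c4 * y))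
     ((b3 + b4 * z) - (a2 + a4 * z)).
Proof.
  unfold curl; cbn [v1 v2 v3].
  rewrite (Dv (fun t => c1 + c2 * x + c3 * t + c4 * x * t) y (c3 + c4 * x))
    by (auto_derive; [auto|ring]).
  rewrite (Dv (fun t => b1 + b2 * t + b3 * x + b4 * t * x) z (b2 + b4 * x))
    by (auto_derive; [auto|ring]).
  rewrite (Dv (fun t => a1 + a2 * y + a3 * t + a4 * y * t) z (a3 + a4 * y))
    by (auto_derive; [auto|ring]).
  rewrite (Dv (fun t => c1 + c2 * t + c3 * y + c4 * t * y) x (c2 + c4 * y))
    by (auto_derive; [auto|ring]).
  rewrite (Dv (fun t => b1 + b2 * z + b3 * t + b4 * z * t) x (b3 + b4 * z))
    by (auto_derive; [auto|ring]).
  rewrite (Dv (fun t => a1 + a2 * t + a3 * z + a4 * t * z) y (a2 + a4 * z))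
    by (auto_derive; [auto|ring]).
  reflexivity.
Qed.

Lemma lin_zero (p q u w : R) : u <> w -> p + q * u = 0 -> p + q * w = 0 -> p = 0 /\ q = 0.
Proof.
  intros Huw H1 H2.
  assert (Hq : q = 0).
  { assert (q * (u - w) = 0) by lra. apply Rmult_integral in H. destruct H; [auto| lra]. }
  subst q. split; lra.
Qed.

Record stokes (F : field) : Prop := {
  st1 : forall a y y' z z' s t,
    (v3 (F a y' s) - v3 (F a y s)) * (z' - z) = (v2 (F a t z') - v2 (F a t z)) * (y' - y);
  st2 : forall a x x' z z' s t,
    (v1 (F t a z') - v1 (F t a z)) * (x' - x) = (v3 (F x' a s) - v3 (F x a s)) * (z' - z);
  st3 : forall a x x' y y' s t,
    (v2 (F x' s a) - v2 (F x s a)) * (y' - y) = (v1 (F t y' a) - v1 (F t y a)) * (x' - x) }.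

Lemma curl_free_stokes F x0 x1 y0 y1 z0 z1 :
  is_ned F -> x0 < x1 -> y0 < y1 -> z0 < z1 ->
  (forall x y z, x0 < x < x1 -> y0 < y < y1 -> z0 < z < z1 -> curl F x y z = zero3) ->
  stokes F.
Proof.
  intros [a1 [a2 [a3 [a4 [b1 [b2 [b3 [b4 [c1 [c2 [c3 [c4 HF]]]]]]]]]]]] Hx Hy Hz Hc.
  assert (EF : F = fun x1 x2 x3 => V3 (a1 + a2 * x2 + a3 * x3 + a4 * x2 * x3)
         (b1 + b2 * x3 + b3 * x1 + b4 * x3 * x1)
         (c1 + c2 * x1 + c3 * x2 + c4 * x1 * x2)).
  { apply functional_extensionality; intro; apply functional_extensionality; intro;
    apply functional_extensionality; intro; apply HF. }
  subst F.
  assert (HP := Hc ((x0+x1)/2) ((y0+y1)/2) ((z0+z1)/2) ltac:(lra) ltac:(lra) ltac:(lra)).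
  assert (HQ := Hc ((3*x0+x1)/4) ((3*y0+y1)/4) ((3*z0+z1)/4) ltac:(lra) ltac:(lra) ltac:(lra)).
  rewrite curl_formula in HP, HQ. unfold zero3 in HP, HQ.
  injection HP as P1 P2 P3. injection HQ as Q1 Q2 Q3.
  destruct (lin_zero (c3 - b2) (c4 - b4) ((x0+x1)/2) ((3*x0+x1)/4)) as [E1 E2];
    [lra | rewrite <- P1; ring | rewrite <- Q1; ring |].
  destruct (lin_zero (a3 - c2) (a4 - c4) ((y0+y1)/2) ((3*y0+y1)/4)) as [E3 E4];
    [lra | rewrite <- P2; ring | rewrite <- Q2; ring |].
  destruct (lin_zero (b3 - a2) (b4 - a4) ((z0+z1)/2) ((3*z0+z1)/4)) as [E5 E6];
    [lra | rewrite <- P3; ring | rewrite <- Q3; ring |].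
  assert (c3 = b2) by lra. assert (c4 = b4) by lra. assert (a3 = c2) by lra.
  assert (a4 = c4) by lra. assert (b3 = a2) by lra.
  subst c3 c4 a3 a4 b3.
  split; intros; cbn [v1 v2 v3]; ring.
Qed.

Lemma ned_v3_z F x y z z' : is_ned F -> v3 (F x y z) = v3 (F x y z').
Proof.
  intros [a1 [a2 [a3 [a4 [b1 [b2 [b3 [b4 [c1 [c2 [c3 [c4 HF]]]]]]]]]]]].
  rewrite !HF. reflexivity.
Qed.

Lemma ned_v2_y F x y y' z : is_ned F -> v2 (F x y z) = v2 (F x y' z).
Proof.
  intros [a1 [a2 [a3 [a4 [b1 [b2 [b3 [b4 [c1 [c2 [c3 [c4 HF]]]]]]]]]]]].
  rewrite !HF. reflexivity.
Qed.

Lemma ned_v3_interp F x0 x1 y0 y1 z0 x y z : is_ned F -> x1 - x0 <> 0 -> y1 - y0 <> 0 ->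
  v3 (F x y z) =
    v3 (F x0 y0 z0) * ((x1 - x)/(x1 - x0)) * ((y1 - y)/(y1 - y0)) +
    v3 (F x1 y0 z0) * ((x - x0)/(x1 - x0)) * ((y1 - y)/(y1 - y0)) +
    v3 (F x0 y1 z0) * ((x1 - x)/(x1 - x0)) * ((y - y0)/(y1 - y0)) +
    v3 (F x1 y1 z0) * ((x - x0)/(x1 - x0)) * ((y - y0)/(y1 - y0)).
Proof.
  intros [a1 [a2 [a3 [a4 [b1 [b2 [b3 [b4 [c1 [c2 [c3 [c4 HF]]]]]]]]]]]] Hx Hy.
  rewrite !HF. cbn [v3]. field. auto.
Qed.

Lemma tD1 m u i j k c bi bj bk : tang_on_edge m u D1 i j k c -> in_D bi bj bk ->
  box_has_edge D1 i j k bi bj bk -> forall s, X m i <= s <= X m (S i) ->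
  v1 (u bi bj bk s (Y m j) (Defs.Z m k)) = c.
Proof. intros H H1 H2 s Hs. exact (H bi bj bk H1 H2 s Hs). Qed.
Lemma tD2 m u i j k c bi bj bk : tang_on_edge m u D2 i j k c -> in_D bi bj bk ->
  box_has_edge D2 i j k bi bj bk -> forall s, Y m j <= s <= Y m (S j) ->
  v2 (u bi bj bk (X m i) s (Defs.Z m k)) = c.
Proof. intros H H1 H2 s Hs. exact (H bi bj bk H1 H2 s Hs). Qed.
Lemma tD3 m u i j k c bi bj bk : tang_on_edge m u D3 i j k c -> in_D bi bj bk ->
  box_has_edge D3 i j k bi bj bk -> forall s, Defs.Z m k <= s <= Defs.Z m (S k) ->
  v3 (u bi bj bk (X m i) (Y m j) s) = c.
Proof. intros H H1 H2 s Hs. exact (H bi bj bk H1 H2 s Hs). Qed.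

Lemma I_mix2 a b g e : b - a <> 0 ->
  is_RInt (fun x => g * (((b-x)/(b-a)) * ((b-x)/(b-a))) + e * (((x-a)/(b-a)) * ((b-x)/(b-a)))) a b
     (g * ((b-a)/3) + e * ((b-a)/6)).
Proof.
  intro H. apply I_gen with g (-2*g/(b-a) + e/(b-a)) (g/(b-a)^2 - e/(b-a)^2).
  - intros; field; auto.
  - field; auto.
Qed.

Lemma IF_phi m a : mesh_ok m -> (a < 2)%nat ->
  is_RInt (fun x => phi m a x * phi m a x) (X m a) (X m (S a)) ((X m (S a) - X m a)/3).
Proof.
  intros Hm Ha. destruct (mesh_facts m Hm) as (HX & _).
  destruct a as [|[|a]]; [| |lia].
  - apply (I_up (X m 0) (X m 1)). lra.
  - apply (I_down (X m 1) (X m 2)). lra.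
Qed.

Lemma Bval0 m u kk a g : mesh_ok m -> (a < 2)%nat ->
  (forall x y z, v3 (u a 0%nat kk x y z) = g * phi m a x * psi m 0 y) ->
  box_int m a 0%nat kk (fun x y z => dot (u a 0%nat kk x y z) (wt m kk a 0%nat kk x y z))
  = (Defs.Z m (S kk) - Defs.Z m kk) * (g * ((Y m 1 - Y m 0)/3)) * ((X m (S a) - X m a)/3).
Proof.
  intros Hm Ha Hv. destruct (mesh_facts m Hm) as (HX & _ & HY & _).
  apply box_sep with (F := fun x => phi m a x * phi m a x)
                     (G := fun y => g * (psi m 0 y * psi m 0 y)).
  - intros. unfold wt, dot. rewrite Nat.eqb_refl. cbn -[phi psi X Y]. rewrite Hv. unfold Rdiv; ring.
  - apply IF_phi; auto.
  - apply I_scal. apply (I_up (Y m 0) (Y m 1)). lra.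
Qed.

Lemma Bval1 m u kk a g e : mesh_ok m -> (a < 2)%nat ->
  (forall x y z, v3 (u a 1%nat kk x y z) =
     g * phi m a x * psi m 1 y + e * phi m a x * ((y - Y m 1)/(Y m 2 - Y m 1))) ->
  box_int m a 1%nat kk (fun x y z => dot (u a 1%nat kk x y z) (wt m kk a 1%nat kk x y z))
  = (Defs.Z m (S kk) - Defs.Z m kk) * (g * ((Y m 2 - Y m 1)/3) + e * ((Y m 2 - Y m 1)/6))
      * ((X m (S a) - X m a)/3).
Proof.
  intros Hm Ha Hv. destruct (mesh_facts m Hm) as (HX & _ & HY & _).
  apply box_sep with (F := fun x => phi m a x * phi m a x)
                     (G := fun y => g * (psi m 1 y * psi m 1 y) +
                                    e * (((y - Y m 1)/(Y m 2 - Y m 1)) * psi m 1 y)).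
  - intros. unfold wt, dot. rewrite Nat.eqb_refl. cbn -[phi psi X Y]. rewrite Hv. unfold Rdiv; ring.
  - apply IF_phi; auto.
  - apply (I_mix2 (Y m 1) (Y m 2)). lra.
Qed.

Lemma Bzero m u kk a b c : c <> kk ->
  box_int m a b c (fun x y z => dot (u a b c x y z) (wt m kk a b c x y z)) = 0.
Proof.
  intros Hc. apply box_zero. intros. unfold wt.
  apply Nat.eqb_neq in Hc. rewrite Hc. rewrite Bool.andb_false_r.
  unfold dot, zero3. cbn. ring.
Qed.

Lemma cid_expand m u w : coarse_int_dot m 0 0 u w =
  ((box_int m 0%nat 0%nat 0%nat (fun x y z => dot (u 0%nat 0%nat 0%nat x y z) (w 0%nat 0%nat 0%nat x y z)) +
    box_int m 0%nat 0%nat 1%nat (fun x y z => dot (u 0%nat 0%nat 1%nat x y z) (w 0%nat 0%nat 1%nat x y z))) +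
   (box_int m 0%nat 1%nat 0%nat (fun x y z => dot (u 0%nat 1%nat 0%nat x y z) (w 0%nat 1%nat 0%nat x y z)) +
    box_int m 0%nat 1%nat 1%nat (fun x y z => dot (u 0%nat 1%nat 1%nat x y z) (w 0%nat 1%nat 1%nat x y z)))) +
  ((box_int m 1%nat 0%nat 0%nat (fun x y z => dot (u 1%nat 0%nat 0%nat x y z) (w 1%nat 0%nat 0%nat x y z)) +
    box_int m 1%nat 0%nat 1%nat (fun x y z => dot (u 1%nat 0%nat 1%nat x y z) (w 1%nat 0%nat 1%nat x y z))) +
   (box_int m 1%nat 1%nat 0%nat (fun x y z => dot (u 1%nat 1%nat 0%nat x y z) (w 1%nat 1%nat 0%nat x y z)) +
    box_int m 1%nat 1%nat 1%nat (fun x y z => dot (u 1%nat 1%nat 1%nat x y z) (w 1%nat 1%nat 1%nat x y z)))).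
Proof. reflexivity. Qed.

Ltac ind := unfold in_D; lia.
Ltac bhe := unfold box_has_edge; lia.
Ltac fe := unfold fine_edge; lia.
Ltac ns := let H := fresh in intro H; unfold is_star_edge in H; decompose [or and] H; congruence.
Ltac bd := let s := fresh "s" in let Hs := fresh "Hs" in
  intros s Hs; exists 0%nat, 0%nat; split; [lia|];
  unfold edge_range in Hs; unfold on_bdry_coarse, edge_point; cbn -[X Y Defs.Z];
  split; [repeat split; lra | repeat (first [left; reflexivity | right]); try reflexivity].

Theorem lemma4p1 (m : mesh) (Hm : mesh_ok m) (u : pwfield)
  (Hu : in_Nh_D m u) (Hi : cond_i m u) (Hii : cond_ii m u) (Hiii : cond_iii m u) :
  curl_not_identically_zero m u.
Proof.
  destruct Hu as [Hned [C1 [C2 C3]]].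
  destruct (mesh_facts m Hm) as (HX & HXe & HY & HYe & HZ & HZe & _).
  apply NNPP; intro Hn.
  assert (Hcz : forall i j k, in_D i j k -> forall x y z, X m i < x < X m (S i) ->
            Y m j < y < Y m (S j) -> Defs.Z m k < z < Defs.Z m (S k) -> curl (u i j k) x y z = zero3).
  { intros i j k Hijk x y z Hx Hy Hz. apply NNPP; intro Hne. apply Hn. exists i, j, k.
    split; [auto|]. exists x, y, z. auto. }
  assert (S111 : stokes (u 1%nat 1%nat 1%nat)).
  { apply (curl_free_stokes _ (X m 1) (X m 2) (Y m 1) (Y m 2) (Defs.Z m 1) (Defs.Z m 2)); try lra.
    - apply Hned; ind.
    - apply (Hcz 1%nat 1%nat 1%nat); ind. }
  assert (S110 : stokes (u 1%nat 1%nat 0%nat)).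
  { apply (curl_free_stokes _ (X m 1) (X m 2) (Y m 1) (Y m 2) (Defs.Z m 0) (Defs.Z m 1)); try lra.
    - apply Hned; ind.
    - apply (Hcz 1%nat 1%nat 0%nat); ind. }
  destruct Hi as (e1 & e2 & e3 & e4 & e5 & e6).
  assert (f1 : v1 (u 1%nat 1%nat 1%nat (X m 1) (Y m 2) (Defs.Z m 1)) = 0)
    by (eapply (tD1 m u 1%nat 2%nat 1%nat); [apply Hii; [fe|ns|bd] | ind | bhe | lra]).
  assert (f2 : v1 (u 1%nat 1%nat 1%nat (X m 1) (Y m 2) (Defs.Z m 2)) = 1)
    by (eapply (tD1 m u 1%nat 2%nat 2%nat); [exact e2 | ind | bhe | lra]).
  assert (f3 : v3 (u 1%nat 1%nat 1%nat (X m 2) (Y m 2) (Defs.Z m 1)) = 0)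
    by (eapply (tD3 m u 2%nat 2%nat 1%nat); [apply Hii; [fe|ns|bd] | ind | bhe | lra]).
  assert (f4 : v3 (u 1%nat 1%nat 1%nat (X m 1) (Y m 2) (Defs.Z m 1)) = -1)
    by (eapply (tD3 m u 1%nat 2%nat 1%nat); [exact e5 | ind | bhe | lra]).
  assert (f5 : v2 (u 1%nat 1%nat 1%nat (X m 2) (Y m 1) (Defs.Z m 2)) = 0)
    by (eapply (tD2 m u 2%nat 1%nat 2%nat); [apply Hii; [fe|ns|bd] | ind | bhe | lra]).
  assert (f6 : v2 (u 1%nat 1%nat 1%nat (X m 1) (Y m 1) (Defs.Z m 2)) = -1)
    by (eapply (tD2 m u 1%nat 1%nat 2%nat); [exact e3 | ind | bhe | lra]).
  assert (f7 : v1 (u 1%nat 1%nat 1%nat (X m 1) (Y m 1) (Defs.Z m 2)) = 0)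
    by (eapply (tD1 m u 1%nat 1%nat 2%nat); [apply Hii; [fe|ns|bd] | ind | bhe | lra]).
  assert (g1 : v3 (u 1%nat 1%nat 0%nat (X m 1) (Y m 2) (Defs.Z m 0)) = 0)
    by (eapply (tD3 m u 1%nat 2%nat 0%nat); [apply Hii; [fe|ns|bd] | ind | bhe | lra]).
  assert (g2 : v2 (u 1%nat 1%nat 0%nat (X m 1) (Y m 1) (Defs.Z m 0)) = 0)
    by (eapply (tD2 m u 1%nat 1%nat 0%nat); [apply Hii; [fe|ns|bd] | ind | bhe | lra]).
  pose proof (st2 _ S111 (Y m 2) (X m 1) (X m 2) (Defs.Z m 1) (Defs.Z m 2) (Defs.Z m 1) (X m 1)) as K1.
  rewrite f2, f1, f3, f4 in K1.
  pose proof (st3 _ S111 (Defs.Z m 2) (X m 1) (X m 2) (Y m 1) (Y m 2) (Y m 1) (X m 1)) as K2.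
  rewrite f5, f6, f2, f7 in K2.
  pose proof (st1 _ S111 (X m 1) (Y m 1) (Y m 2) (Defs.Z m 1) (Defs.Z m 2) (Defs.Z m 1) (Y m 1)) as K3.
  rewrite f4, f6 in K3.
  pose proof (st1 _ S110 (X m 1) (Y m 1) (Y m 2) (Defs.Z m 0) (Defs.Z m 1) (Defs.Z m 0) (Y m 1)) as K4.
  rewrite g1, g2 in K4.
  destruct (C3 1%nat 1%nat 0%nat ltac:(ind) ltac:(ind) (X m 1) (Y m 1) ltac:(lra) ltac:(lra)) as [_ K5].
  assert (h00a : v3 (u 0%nat 0%nat 1%nat (X m 0) (Y m 0) (Defs.Z m 1)) = 0)
    by (eapply (tD3 m u 0%nat 0%nat 1%nat); [apply Hii; [fe|ns|bd] | ind | bhe | lra]).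
  assert (h00b : v3 (u 0%nat 0%nat 1%nat (X m 1) (Y m 0) (Defs.Z m 1)) = 0)
    by (eapply (tD3 m u 1%nat 0%nat 1%nat); [apply Hii; [fe|ns|bd] | ind | bhe | lra]).
  assert (h00c : v3 (u 0%nat 0%nat 1%nat (X m 0) (Y m 1) (Defs.Z m 1)) = 0)
    by (eapply (tD3 m u 0%nat 1%nat 1%nat); [apply Hii; [fe|ns|bd] | ind | bhe | lra]).
  assert (h10a : v3 (u 1%nat 0%nat 1%nat (X m 1) (Y m 0) (Defs.Z m 1)) = 0)
    by (eapply (tD3 m u 1%nat 0%nat 1%nat); [apply Hii; [fe|ns|bd] | ind | bhe | lra]).
  assert (h10b : v3 (u 1%nat 0%nat 1%nat (X m 2) (Y m 0) (Defs.Z m 1)) = 0)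
    by (eapply (tD3 m u 2%nat 0%nat 1%nat); [apply Hii; [fe|ns|bd] | ind | bhe | lra]).
  assert (h10c : v3 (u 1%nat 0%nat 1%nat (X m 2) (Y m 1) (Defs.Z m 1)) = 0)
    by (eapply (tD3 m u 2%nat 1%nat 1%nat); [apply Hii; [fe|ns|bd] | ind | bhe | lra]).
  assert (h01a : v3 (u 0%nat 1%nat 1%nat (X m 0) (Y m 1) (Defs.Z m 1)) = 0)
    by (eapply (tD3 m u 0%nat 1%nat 1%nat); [apply Hii; [fe|ns|bd] | ind | bhe | lra]).
  assert (h01b : v3 (u 0%nat 1%nat 1%nat (X m 0) (Y m 2) (Defs.Z m 1)) = 0)
    by (eapply (tD3 m u 0%nat 2%nat 1%nat); [apply Hii; [fe|ns|bd] | ind | bhe | lra]).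
  assert (h11a : v3 (u 1%nat 1%nat 1%nat (X m 2) (Y m 1) (Defs.Z m 1)) = 0)
    by (eapply (tD3 m u 2%nat 1%nat 1%nat); [apply Hii; [fe|ns|bd] | ind | bhe | lra]).
  assert (h01c : v3 (u 0%nat 1%nat 1%nat (X m 1) (Y m 2) (Defs.Z m 1)) = -1)
    by (eapply (tD3 m u 1%nat 2%nat 1%nat); [exact e5 | ind | bhe | lra]).
  assert (l00a : v3 (u 0%nat 0%nat 0%nat (X m 0) (Y m 0) (Defs.Z m 0)) = 0)
    by (eapply (tD3 m u 0%nat 0%nat 0%nat); [apply Hii; [fe|ns|bd] | ind | bhe | lra]).
  assert (l00b : v3 (u 0%nat 0%nat 0%nat (X m 1) (Y m 0) (Defs.Z m 0)) = 0)
    by (eapply (tD3 m u 1%nat 0%nat 0%nat); [apply Hii; [fe|ns|bd] | ind | bhe | lra]).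
  assert (l00c : v3 (u 0%nat 0%nat 0%nat (X m 0) (Y m 1) (Defs.Z m 0)) = 0)
    by (eapply (tD3 m u 0%nat 1%nat 0%nat); [apply Hii; [fe|ns|bd] | ind | bhe | lra]).
  assert (l10a : v3 (u 1%nat 0%nat 0%nat (X m 1) (Y m 0) (Defs.Z m 0)) = 0)
    by (eapply (tD3 m u 1%nat 0%nat 0%nat); [apply Hii; [fe|ns|bd] | ind | bhe | lra]).
  assert (l10b : v3 (u 1%nat 0%nat 0%nat (X m 2) (Y m 0) (Defs.Z m 0)) = 0)
    by (eapply (tD3 m u 2%nat 0%nat 0%nat); [apply Hii; [fe|ns|bd] | ind | bhe | lra]).
  assert (l10c : v3 (u 1%nat 0%nat 0%nat (X m 2) (Y m 1) (Defs.Z m 0)) = 0)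
    by (eapply (tD3 m u 2%nat 1%nat 0%nat); [apply Hii; [fe|ns|bd] | ind | bhe | lra]).
  assert (l01a : v3 (u 0%nat 1%nat 0%nat (X m 0) (Y m 1) (Defs.Z m 0)) = 0)
    by (eapply (tD3 m u 0%nat 1%nat 0%nat); [apply Hii; [fe|ns|bd] | ind | bhe | lra]).
  assert (l01b : v3 (u 0%nat 1%nat 0%nat (X m 0) (Y m 2) (Defs.Z m 0)) = 0)
    by (eapply (tD3 m u 0%nat 2%nat 0%nat); [apply Hii; [fe|ns|bd] | ind | bhe | lra]).
  assert (l01c : v3 (u 0%nat 1%nat 0%nat (X m 1) (Y m 2) (Defs.Z m 0)) = 0)
    by (eapply (tD3 m u 1%nat 2%nat 0%nat); [apply Hii; [fe|ns|bd] | ind | bhe | lra]).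
  assert (l11a : v3 (u 1%nat 1%nat 0%nat (X m 2) (Y m 1) (Defs.Z m 0)) = 0)
    by (eapply (tD3 m u 2%nat 1%nat 0%nat); [apply Hii; [fe|ns|bd] | ind | bhe | lra]).
  assert (l11b : v3 (u 1%nat 1%nat 0%nat (X m 2) (Y m 2) (Defs.Z m 0)) = 0)
    by (eapply (tD3 m u 2%nat 2%nat 0%nat); [apply Hii; [fe|ns|bd] | ind | bhe | lra]).
  destruct (C1 0%nat 0%nat 1%nat ltac:(ind) ltac:(ind) (Y m 1) (Defs.Z m 1) ltac:(lra) ltac:(lra)) as [_ q1].
  destruct (C1 0%nat 1%nat 1%nat ltac:(ind) ltac:(ind) (Y m 1) (Defs.Z m 1) ltac:(lra) ltac:(lra)) as [_ q2].
  destruct (C2 1%nat 0%nat 1%nat ltac:(ind) ltac:(ind) (X m 1) (Defs.Z m 1) ltac:(lra) ltac:(lra)) as [_ q3].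
  destruct (C1 0%nat 0%nat 0%nat ltac:(ind) ltac:(ind) (Y m 1) (Defs.Z m 0) ltac:(lra) ltac:(lra)) as [_ r1].
  destruct (C1 0%nat 1%nat 0%nat ltac:(ind) ltac:(ind) (Y m 1) (Defs.Z m 0) ltac:(lra) ltac:(lra)) as [_ r2].
  destruct (C2 1%nat 0%nat 0%nat ltac:(ind) ltac:(ind) (X m 1) (Defs.Z m 0) ltac:(lra) ltac:(lra)) as [_ r3].
  set (gam := v3 (u 1%nat 1%nat 1%nat (X m 1) (Y m 1) (Defs.Z m 1))) in *.
  set (bet := v3 (u 1%nat 1%nat 0%nat (X m 1) (Y m 1) (Defs.Z m 0))) in *.
  assert (V001 : forall x y z, v3 (u 0%nat 0%nat 1%nat x y z) = gam * phi m 0 x * psi m 0 y).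
  { intros x y z.
    rewrite (ned_v3_interp (u 0%nat 0%nat 1%nat) (X m 0) (X m 1) (Y m 0) (Y m 1) (Defs.Z m 1) x y z)
      by (first [apply Hned; ind | lra]).
    rewrite h00a, h00b, h00c, q1, q3. unfold phi, psi, gam, bet; cbv beta iota. field; repeat split; lra. }
  assert (V101 : forall x y z, v3 (u 1%nat 0%nat 1%nat x y z) = gam * phi m 1 x * psi m 0 y).
  { intros x y z.
    rewrite (ned_v3_interp (u 1%nat 0%nat 1%nat) (X m 1) (X m 2) (Y m 0) (Y m 1) (Defs.Z m 1) x y z)
      by (first [apply Hned; ind | lra]).
    rewrite h10a, h10b, h10c, q3. unfold phi, psi, gam, bet; cbv beta iota. field; repeat split; lra. }
  assert (V011 : forall x y z, v3 (u 0%nat 1%nat 1%nat x y z) = gam * phi m 0 x * psi m 1 y + (-1) * phi m 0 x * ((y - Y m 1)/(Y m 2 - Y m 1))).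
  { intros x y z.
    rewrite (ned_v3_interp (u 0%nat 1%nat 1%nat) (X m 0) (X m 1) (Y m 1) (Y m 2) (Defs.Z m 1) x y z)
      by (first [apply Hned; ind | lra]).
    rewrite h01a, h01b, h01c, q2. unfold phi, psi, gam, bet; cbv beta iota. field; repeat split; lra. }
  assert (V111 : forall x y z, v3 (u 1%nat 1%nat 1%nat x y z) = gam * phi m 1 x * psi m 1 y + (-1) * phi m 1 x * ((y - Y m 1)/(Y m 2 - Y m 1))).
  { intros x y z.
    rewrite (ned_v3_interp (u 1%nat 1%nat 1%nat) (X m 1) (X m 2) (Y m 1) (Y m 2) (Defs.Z m 1) x y z)
      by (first [apply Hned; ind | lra]).
    rewrite h11a, f3, f4. unfold phi, psi, gam, bet; cbv beta iota. field; repeat split; lra. }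
  assert (V000 : forall x y z, v3 (u 0%nat 0%nat 0%nat x y z) = bet * phi m 0 x * psi m 0 y).
  { intros x y z.
    rewrite (ned_v3_interp (u 0%nat 0%nat 0%nat) (X m 0) (X m 1) (Y m 0) (Y m 1) (Defs.Z m 0) x y z)
      by (first [apply Hned; ind | lra]).
    rewrite l00a, l00b, l00c, r1, r3. unfold phi, psi, gam, bet; cbv beta iota. field; repeat split; lra. }
  assert (V100 : forall x y z, v3 (u 1%nat 0%nat 0%nat x y z) = bet * phi m 1 x * psi m 0 y).
  { intros x y z.
    rewrite (ned_v3_interp (u 1%nat 0%nat 0%nat) (X m 1) (X m 2) (Y m 0) (Y m 1) (Defs.Z m 0) x y z)
      by (first [apply Hned; ind | lra]).
    rewrite l10a, l10b, l10c, r3. unfold phi, psi, gam, bet; cbv beta iota. field; repeat split; lra. }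
  assert (V010 : forall x y z, v3 (u 0%nat 1%nat 0%nat x y z) = bet * phi m 0 x * psi m 1 y + 0 * phi m 0 x * ((y - Y m 1)/(Y m 2 - Y m 1))).
  { intros x y z.
    rewrite (ned_v3_interp (u 0%nat 1%nat 0%nat) (X m 0) (X m 1) (Y m 1) (Y m 2) (Defs.Z m 0) x y z)
      by (first [apply Hned; ind | lra]).
    rewrite l01a, l01b, l01c, r2. unfold phi, psi, gam, bet; cbv beta iota. field; repeat split; lra. }
  assert (V110 : forall x y z, v3 (u 1%nat 1%nat 0%nat x y z) = bet * phi m 1 x * psi m 1 y + 0 * phi m 1 x * ((y - Y m 1)/(Y m 2 - Y m 1))).
  { intros x y z.
    rewrite (ned_v3_interp (u 1%nat 1%nat 0%nat) (X m 1) (X m 2) (Y m 1) (Y m 2) (Defs.Z m 0) x y z)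
      by (first [apply Hned; ind | lra]).
    rewrite l11a, l11b, g1. unfold phi, psi, gam, bet; cbv beta iota. field; repeat split; lra. }
  assert (EU := Hiii 0%nat 0%nat ltac:(lia) (wt m 1) (wt_in_NhT m 1 Hm ltac:(lia))).
  assert (EL := Hiii 0%nat 0%nat ltac:(lia) (wt m 0) (wt_in_NhT m 0 Hm ltac:(lia))).
  rewrite cid_expand in EU, EL.
  rewrite (Bzero m u 1 0 0 0) in EU by lia. rewrite (Bzero m u 1 0 1 0) in EU by lia.
  rewrite (Bzero m u 1 1 0 0) in EU by lia. rewrite (Bzero m u 1 1 1 0) in EU by lia.
  rewrite (Bzero m u 0 0 0 1) in EL by lia. rewrite (Bzero m u 0 0 1 1) in EL by lia.
  rewrite (Bzero m u 0 1 0 1) in EL by lia. rewrite (Bzero m u 0 1 1 1) in EL by lia.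
  rewrite (Bval0 m u 1 0 gam Hm ltac:(lia) V001) in EU.
  rewrite (Bval0 m u 1 1 gam Hm ltac:(lia) V101) in EU.
  rewrite (Bval1 m u 1 0 gam (-1) Hm ltac:(lia) V011) in EU.
  rewrite (Bval1 m u 1 1 gam (-1) Hm ltac:(lia) V111) in EU.
  rewrite (Bval0 m u 0 0 bet Hm ltac:(lia) V000) in EL.
  rewrite (Bval0 m u 0 1 bet Hm ltac:(lia) V100) in EL.
  rewrite (Bval1 m u 0 0 bet 0 Hm ltac:(lia) V010) in EL.
  rewrite (Bval1 m u 0 1 bet 0 Hm ltac:(lia) V110) in EL.
  set (H := X m 2 - X m 1) in *.
  assert (HH : 0 < H) by (unfold H; lra).
  assert (Lz1 : Defs.Z m 2 - Defs.Z m 1 = H) by lra.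
  assert (Lz0 : Defs.Z m 1 - Defs.Z m 0 = H) by lra.
  assert (Ly1 : Y m 2 - Y m 1 = H) by lra.
  assert (Ly0 : Y m 1 - Y m 0 = H) by lra.
  assert (Lx0 : X m 1 - X m 0 = H) by lra.
  change (X m (S 1) - X m 1) with H in EU, EL.
  change (Defs.Z m (S 1)) with (Defs.Z m 2) in EU.
  change (Defs.Z m (S 0)) with (Defs.Z m 1) in EL.
  change (X m (S 0)) with (X m 1) in EU, EL.
  rewrite Lz1, Ly1, Ly0, Lx0 in EU. rewrite Lz0, Ly1, Ly0, Lx0 in EL.
  rewrite Lz1, Ly1 in K3. rewrite Lz0, Ly1 in K4.
  assert (H3 : 0 < H * H * H) by (apply Rmult_lt_0_compat; [apply Rmult_lt_0_compat|]; lra).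
  assert (Eb : bet * (H * H * H) * (4/9) = 0) by (rewrite <- EL; field).
  assert (Hb : bet = 0).
  { apply Rmult_integral in Eb. destruct Eb as [Eb|Eb]; [|lra].
    apply Rmult_integral in Eb. destruct Eb as [Eb|Eb]; [auto|lra]. }
  rewrite Hb in K4.
  assert (Hd : v2 (u 1%nat 1%nat 0%nat (X m 1) (Y m 1) (Defs.Z m 1)) = 0).
  { assert (v2 (u 1%nat 1%nat 0%nat (X m 1) (Y m 1) (Defs.Z m 1)) * H = 0) by lra.
    apply Rmult_integral in H0. destruct H0; [auto|lra]. }
  rewrite K5 in Hd. rewrite Hd in K3.
  assert (Hg : gam * H = 0) by lra.
  apply Rmult_integral in Hg. destruct Hg as [Hg|Hg]; [|lra].
  rewrite Hg in EU.
  assert (H * H * H * (-1/9) = 0) by (rewrite <- EU; field).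
  lra.
Qed.
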